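(* There is an absolute constant $C>0$ such that the following holds. Let $0<\delta\le\frac14$, $0<a<\pi$, $\lambda\ge1$, $M\ge1$, $0<\kappa\le1$, and $0\le\mu<1-\delta$. Let $g$ be a continuous function on the closed unit disk, analytic on its interior, satisfying $|g(\delta)|\ge\kappa$ and, for every $0<\gamma\le1-\delta$, $|z|\le1-\gamma\Rightarrow|g(z)|\le\frac{\lambda M}{\gamma}$. Let $\Gamma_\mu$ be the circle with center $\delta$ and radius $1-\delta-\mu$, and let $P$ be the closed arc of $\Gamma_\mu$ that is symmetric with respect to the real axis, has midpoint $1-\mu$, and has arc length $a$. Then $$\max_{z\in P}|g(z)|\ge\left(\frac{\delta\kappa}{\lambda M}\right)^{C/a}.$$
   Context: The paper writes the bound as $(\delta\kappa/(\lambda M))^{O(1/a)}$, where $O(\cdot)$ hides an absolute constant. *)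

(* Defs.v *)
From Stdlib Require Import Reals.
From Coquelicot Require Export Coquelicot.
Open Scope R_scope.

Definition gamma_radius (delta mu : R) : R := 1 - delta - mu.

(* The closed arc P of Gamma_mu, symmetric w.r.t. the real axis, with
   midpoint 1 - mu (= delta + radius, angle 0) and arc length a:
   the points delta + r e^{i theta} with |theta| <= a / (2 r). *)
Definition arcP (delta mu a : R) (z : C) : Prop :=
  exists theta : R,
    Rabs theta <= a / (2 * gamma_radius delta mu) /\
    z = (delta + gamma_radius delta mu * cos theta,
         gamma_radius delta mu * sin theta).

Definition C_holo_at (g : C -> C) (z : C) : Prop :=
  ex_derive (K := C_AbsRing) (V := C_NormedModule) g z.

Definition cont_on_closed_disk (g : C -> C) : Prop :=
  forall z : C, Cmod z <= 1 ->
    filterlim g (within (fun w : C => Cmod w <= 1) (locally z)) (locally (g z)).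

(* Main.v *)
Require Import Defs.
From Stdlib Require Import Reals Lra Lia Psatz Classical FunctionalExtensionality ClassicalEpsilon.
From Coquelicot Require Import Coquelicot.
Open Scope R_scope.


Lemma normC (x : C) : @norm C_AbsRing C_NormedModule x = Cmod x.
Proof. reflexivity. Qed.
Lemma normC2 (x : C) : @norm C_AbsRing (AbsRing_NormedModule C_AbsRing) x = Cmod x.
Proof. reflexivity. Qed.

Lemma deriv_eps (H : C -> C) z :
  ex_derive (K:=C_AbsRing) (V:=C_NormedModule) H z ->
  exists l : C, forall eps, 0 < eps -> exists d, 0 < d /\ forall w, Cmod (w - z) < d ->
     Cmod (H w - H z - l * (w - z)) <= eps * Cmod (w - z).
Proof.
  intros [l [_ Hd]]. exists l. intros eps Heps.
  assert (Hl : is_filter_lim (locally z) z) by (intros P HP; exact HP).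
  specialize (Hd z Hl (mkposreal eps Heps)).
  destruct Hd as [d Hd]. exists d. split. apply cond_pos.
  intros w Hw. specialize (Hd w Hw).
  change (Cmod (minus (minus (H w) (H z)) (scal (minus w z) l)) <= eps * Cmod (minus w z)) in Hd.
  replace (H w - H z - l * (w - z))%C with (minus (minus (H w) (H z)) (scal (minus w z) l)).
  replace (w - z)%C with (minus w z). exact Hd. reflexivity.
  unfold minus, plus, opp, scal; simpl. change mult with Cmult. 
  ring.
Qed.

Lemma Rabs_fst_le (z : C) : Rabs (fst z) <= Cmod z.
Proof.
  destruct z as [x y]; unfold Cmod; simpl. rewrite <- sqrt_Rsqr_abs.
  apply sqrt_le_1_alt. unfold Rsqr. nra.
Qed.
Lemma Rabs_snd_le (z : C) : Rabs (snd z) <= Cmod z.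
Proof.
  destruct z as [x y]; unfold Cmod; simpl. rewrite <- sqrt_Rsqr_abs.
  apply sqrt_le_1_alt. unfold Rsqr. nra.
Qed.

Lemma cont_RC (f : R -> C) x :
  (forall eps, 0 < eps -> exists d, 0 < d /\ forall y, Rabs (y - x) < d -> Cmod (f y - f x) < eps) ->
  @continuous R_UniformSpace C_R_CompleteNormedModule f x.
Proof.
  intros Hc. unfold continuous. apply filterlim_locally. intros eps.
  destruct (Hc eps (cond_pos eps)) as [d [Hd Hf]].
  exists (mkposreal d Hd). intros y Hy. specialize (Hf y Hy).
  split; simpl.
  - unfold ball; simpl. unfold AbsRing_ball; simpl. unfold abs, minus, plus, opp; simpl.
    eapply Rle_lt_trans; [|exact Hf]. 
    eapply Rle_trans; [|apply (Rabs_fst_le (f y - f x)%C)]. simpl. right; reflexivity.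
  - unfold ball; simpl. unfold AbsRing_ball; simpl. unfold abs, minus, plus, opp; simpl.
    eapply Rle_lt_trans; [|exact Hf]. 
    eapply Rle_trans; [|apply (Rabs_snd_le (f y - f x)%C)]. simpl. right; reflexivity.
Qed.

Lemma sin_lip a b : Rabs (sin b - sin a) <= Rabs (b - a).
Proof.
  destruct (MVT_abs sin cos a b) as [c [Hc _]].
  { intros; apply derivable_pt_lim_sin. }
  rewrite Hc. pose proof (COS_bound c).
  assert (Rabs (cos c) <= 1) by (apply Rabs_le; lra).
  pose proof (Rabs_pos (b - a)). nra.
Qed.
Lemma cos_lip a b : Rabs (cos b - cos a) <= Rabs (b - a).
Proof.
  destruct (MVT_abs cos (fun x => - sin x) a b) as [c [Hc _]].
  { intros; apply derivable_pt_lim_cos. }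
  rewrite Hc. pose proof (SIN_bound c).
  assert (Rabs (- sin c) <= 1) by (apply Rabs_le; lra).
  pose proof (Rabs_pos (b - a)). nra.
Qed.

Lemma Cmod_le_abs (z : C) : Cmod z <= Rabs (fst z) + Rabs (snd z).
Proof.
  destruct z as [x y]; unfold Cmod; cbn [fst snd].
  pose proof (Rabs_pos x); pose proof (Rabs_pos y).
  rewrite <- (sqrt_Rsqr (Rabs x + Rabs y)) by lra.
  apply sqrt_le_1_alt. unfold Rsqr.
  rewrite <- (pow2_abs x), <- (pow2_abs y). nra.
Qed.

Definition ep (t : R) : C := (cos t, sin t).
Definition zp (c : C) (r t : R) : C := (c + RtoC r * ep t)%C.

Lemma Cmod_ep t : Cmod (ep t) = 1.
Proof. unfold Cmod, ep; cbn [fst snd]. rewrite <- sqrt_1. f_equal.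
  pose proof (sin2_cos2 t). unfold Rsqr in H. lra. Qed.

Lemma ep_lip t v : Cmod (ep t - ep v) <= 2 * Rabs (t - v).
Proof.
  eapply Rle_trans. apply Cmod_le_abs. unfold ep; cbn [fst snd Cminus Cplus Copp].
  pose proof (cos_lip v t); pose proof (sin_lip v t). simpl. 
  replace (cos t + - cos v) with (cos t - cos v) by ring.
  replace (sin t + - sin v) with (sin t - sin v) by ring. lra.
Qed.

Lemma zp_c c r t : Cmod (zp c r t - c) = Rabs r.
Proof.
  unfold zp. replace (c + RtoC r * ep t - c)%C with (RtoC r * ep t)%C by ring.
  rewrite Cmod_mult, Cmod_ep, Cmod_R. ring.
Qed.

Lemma zp_lip c r t u v : Cmod (zp c r t - zp c u v) <= Rabs (r - u) + 2 * Rabs u * Rabs (t - v).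
Proof.
  unfold zp. replace (c + RtoC r * ep t - (c + RtoC u * ep v))%C
    with (RtoC (r - u) * ep t + RtoC u * (ep t - ep v))%C.
  2: { rewrite RtoC_minus. ring. }
  eapply Rle_trans. apply Cmod_triangle. rewrite !Cmod_mult, Cmod_ep, !Cmod_R.
  pose proof (ep_lip t v). pose proof (Rabs_pos u). nra.
Qed.

Definition Ccont (H : C -> C) (z : C) :=
  forall eps, 0 < eps -> exists d, 0 < d /\ forall w, Cmod (w - z) < d -> Cmod (H w - H z) < eps.

Lemma hol_cont H z : ex_derive (K:=C_AbsRing) (V:=C_NormedModule) H z -> Ccont H z.
Proof.
  intros Hd. destruct (deriv_eps H z Hd) as [l Hl].
  intros eps Heps. destruct (Hl 1 Rlt_0_1) as [d [Hd0 Hd1]].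
  pose proof (Cmod_ge_0 l).
  exists (Rmin d (eps / (Cmod l + 2))). split.
  { apply Rmin_pos; auto. apply Rdiv_lt_0_compat; lra. }
  intros w Hw. assert (Hw1 : Cmod (w - z) < d) by (eapply Rlt_le_trans; [exact Hw| apply Rmin_l]).
  assert (Hw2 : Cmod (w - z) < eps / (Cmod l + 2)) by (eapply Rlt_le_trans; [exact Hw| apply Rmin_r]).
  specialize (Hd1 w Hw1).
  replace (H w - H z)%C with ((H w - H z - l * (w - z)) + l * (w - z))%C by ring.
  eapply Rle_lt_trans. apply Cmod_triangle. rewrite Cmod_mult.
  pose proof (Cmod_ge_0 (w - z)).
  apply (Rmult_lt_compat_r (Cmod l + 2)) in Hw2; [|lra].
  unfold Rdiv in Hw2. rewrite Rmult_assoc, Rinv_l, Rmult_1_r in Hw2 by lra.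
  nra.
Qed.

Lemma cont_theta H c r t0 : Ccont H (zp c r t0) ->
  @continuous R_UniformSpace C_R_CompleteNormedModule (fun t => H (zp c r t)) t0.
Proof.
  intros Hc. apply cont_RC. intros eps Heps.
  destruct (Hc eps Heps) as [d [Hd Hd']].
  exists (d / (2 * Rabs r + 1)). split.
  { apply Rdiv_lt_0_compat; auto. pose proof (Rabs_pos r); lra. }
  intros y Hy. apply Hd'. eapply Rle_lt_trans. apply zp_lip.
  rewrite Rminus_diag, Rabs_R0, Rplus_0_l.
  pose proof (Rabs_pos r). pose proof (Rabs_pos (y - t0)).
  apply (Rmult_lt_compat_r (2 * Rabs r + 1)) in Hy; [|lra].
  unfold Rdiv in Hy. rewrite Rmult_assoc, Rinv_l, Rmult_1_r in Hy by lra.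
  nra.
Qed.

Lemma cont_rho H c r0 t : Ccont H (zp c r0 t) ->
  @continuous R_UniformSpace C_R_CompleteNormedModule (fun r => H (zp c r t)) r0.
Proof.
  intros Hc. apply cont_RC. intros eps Heps.
  destruct (Hc eps Heps) as [d [Hd Hd']].
  exists d. split; auto.
  intros y Hy. apply Hd'. eapply Rle_lt_trans. apply zp_lip.
  rewrite Rminus_diag, Rabs_R0. lra.
Qed.

Lemma cont_rho_inv H c r0 t : 0 < r0 -> Ccont H (zp c r0 t) ->
  @continuous R_UniformSpace C_R_CompleteNormedModule (fun r => scal (/ r) (H (zp c r t))) r0.
Proof.
  intros Hr Hc.
  pose proof (@continuous_scal R_UniformSpace R_AbsRing C_R_NormedModule (fun r => / r) (fun r => H (zp c r t)) r0) as K.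
  apply K.
  - apply continuous_Rinv_comp. apply continuous_id. lra.
  - apply cont_rho; auto.
Qed.


Definition CInt (f : R -> C) a b : C := @RInt C_R_CompleteNormedModule f a b.
Definition CexI (f : R -> C) a b : Prop := @ex_RInt C_R_CompleteNormedModule f a b.

Lemma scalC (k : R) (x : C) : @scal R_Ring (CompleteNormedModule.ModuleSpace R_AbsRing C_R_CompleteNormedModule) k x = Cmult (RtoC k) x.
Proof. destruct x as [a b]. unfold Cmult, RtoC. cbn. unfold prod_scal. cbn.
  change (@scal R_Ring R_ModuleSpace k a) with (k * a). change (@scal R_Ring R_ModuleSpace k b) with (k * b).
  apply injective_projections; cbn; ring. Qed.

Lemma CInt_plus f g a b : CexI f a b -> CexI g a b ->
  CInt (fun t => f t + g t)%C a b = (CInt f a b + CInt g a b)%C.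
Proof. intros Hf Hg. unfold CInt. apply (RInt_plus (V:=C_R_CompleteNormedModule) f g a b Hf Hg). Qed.

Lemma CInt_chasles f a b c : CexI f a b -> CexI f b c ->
  (CInt f a b + CInt f b c)%C = CInt f a c.
Proof. intros Hf Hg. unfold CInt. apply (RInt_Chasles (V:=C_R_CompleteNormedModule) f a b c Hf Hg). Qed.

Lemma CInt_bound f a b M : a <= b -> CexI f a b -> (forall t, a <= t <= b -> Cmod (f t) <= M) ->
  Cmod (CInt f a b) <= (b - a) * M.
Proof.
  intros Hab Hf HM. rewrite Cmod_norm.
  apply (norm_RInt_le_const (V:=C_R_NormedModule) f a b); auto.
  intros t Ht. rewrite <- Cmod_norm. apply HM; auto.
  apply (RInt_correct (V:=C_R_CompleteNormedModule)). exact Hf.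
Qed.

Lemma CexI_cont f a b : a <= b -> (forall t, a <= t <= b -> @continuous R_UniformSpace C_R_CompleteNormedModule f t) -> CexI f a b.
Proof.
  intros Hab Hc. apply (ex_RInt_continuous (V:=C_R_CompleteNormedModule)).
  intros z Hz. rewrite Rmin_left, Rmax_right in Hz by lra. apply Hc; auto.
Qed.

Notation sc := (@scal R_Ring (CompleteNormedModule.ModuleSpace R_AbsRing C_R_CompleteNormedModule)).

Definition Tt H c r t1 t2 := CInt (fun t => H (zp c r t)) t1 t2.
Definition Sr H c t r1 r2 := CInt (fun r => sc (/ r) (H (zp c r t))) r1 r2.
Definition IP H c r1 r2 t1 t2 :=
  ((Tt H c r2 t1 t2 - Tt H c r1 t1 t2) + Ci * (Sr H c t2 r1 r2 - Sr H c t1 r1 r2))%C.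
Definition Creg H c r1 r2 t1 t2 :=
  forall r t, r1 <= r <= r2 -> t1 <= t <= t2 -> Ccont H (zp c r t).

Lemma Creg_Tex H c r1 r2 t1 t2 r a b : Creg H c r1 r2 t1 t2 -> r1 <= r <= r2 -> t1 <= a -> a <= b -> b <= t2 ->
  CexI (fun t => H (zp c r t)) a b.
Proof.
  intros HC Hr Ha Hab Hb. apply CexI_cont; auto. intros t Ht. apply cont_theta. apply HC; lra.
Qed.

Lemma Creg_Sex H c r1 r2 t1 t2 t a b : 0 < r1 -> Creg H c r1 r2 t1 t2 -> t1 <= t <= t2 -> r1 <= a -> a <= b -> b <= r2 ->
  CexI (fun r => sc (/ r) (H (zp c r t))) a b.
Proof.
  intros Hr1 HC Ht Ha Hab Hb. apply CexI_cont; auto. intros r Hr. apply cont_rho_inv. lra. apply HC; lra.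
Qed.

Lemma IP_split_t H c r1 r2 t1 t2 tm : 0 < r1 -> r1 <= r2 -> Creg H c r1 r2 t1 t2 -> t1 <= tm <= t2 ->
  IP H c r1 r2 t1 t2 = (IP H c r1 r2 t1 tm + IP H c r1 r2 tm t2)%C.
Proof.
  intros Hr1 Hr HC Ht. unfold IP, Tt.
  rewrite <- (CInt_chasles (fun t => H (zp c r2 t)) t1 tm t2).
  rewrite <- (CInt_chasles (fun t => H (zp c r1 t)) t1 tm t2).
  ring.
  all: eapply Creg_Tex; eauto; lra.
Qed.

Lemma IP_split_r H c r1 r2 t1 t2 rm : 0 < r1 -> t1 <= t2 -> Creg H c r1 r2 t1 t2 -> r1 <= rm <= r2 ->
  IP H c r1 r2 t1 t2 = (IP H c r1 rm t1 t2 + IP H c rm r2 t1 t2)%C.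
Proof.
  intros Hr1 Ht HC Hr. unfold IP, Sr.
  rewrite <- (CInt_chasles _ r1 rm r2).
  rewrite <- (CInt_chasles (fun r => sc (/ r) (H (zp c r t1))) r1 rm r2).
  ring.
  all: eapply Creg_Sex; eauto; lra.
Qed.

Lemma IP_plus H1 H2 c r1 r2 t1 t2 : 0 < r1 -> r1 <= r2 -> t1 <= t2 ->
  Creg H1 c r1 r2 t1 t2 -> Creg H2 c r1 r2 t1 t2 ->
  IP (fun z => H1 z + H2 z)%C c r1 r2 t1 t2 = (IP H1 c r1 r2 t1 t2 + IP H2 c r1 r2 t1 t2)%C.
Proof.
  intros Hr1 Hr Ht HC1 HC2. unfold IP, Tt, Sr.
  assert (E : forall t, (fun r => sc (/ r) (Cplus (H1 (zp c r t)) (H2 (zp c r t))))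
     = (fun r => Cplus (sc (/ r) (H1 (zp c r t))) (sc (/ r) (H2 (zp c r t))))).
  { intros t. apply functional_extensionality. intros r. apply (scal_distr_l (/ r) (H1 (zp c r t)) (H2 (zp c r t))). }
  rewrite !E.
  rewrite (CInt_plus (fun t => H1 (zp c r2 t)) (fun t => H2 (zp c r2 t))),
   (CInt_plus (fun t => H1 (zp c r1 t)) (fun t => H2 (zp c r1 t))),
   (CInt_plus (fun r => sc (/ r) (H1 (zp c r t2))) (fun r => sc (/ r) (H2 (zp c r t2)))),
   (CInt_plus (fun r => sc (/ r) (H1 (zp c r t1))) (fun r => sc (/ r) (H2 (zp c r t1)))).
  1: ring.
  all: match goal with
   | |- CexI (fun t => ?h (zp ?c ?r t)) _ _ => apply (Creg_Tex h c r1 r2 t1 t2); [assumption|lra|lra|lra|lra]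
   | |- CexI (fun r => sc (/ r) (?h (zp ?c r ?t))) _ _ => apply (Creg_Sex h c r1 r2 t1 t2); [lra|assumption|lra|lra|lra|lra]
   end.
Qed.

Lemma CInt_lin_t (B c : C) r t1 t2 :
  CInt (fun t => B * (zp c r t - c))%C t1 t2 =
  (fst B * r * (sin t2 - sin t1) + snd B * r * (cos t2 - cos t1),
   - fst B * r * (cos t2 - cos t1) + snd B * r * (sin t2 - sin t1)).
Proof.
  unfold CInt. apply (is_RInt_unique (V:=C_R_CompleteNormedModule)).
  apply (is_RInt_fct_extend_pair (U:=R_NormedModule) (V:=R_NormedModule)).
  - eapply is_RInt_ext.
    2: { replace (fst B * r * (sin t2 - sin t1) + snd B * r * (cos t2 - cos t1))
           with ((fst B * r * sin t2 + snd B * r * cos t2) - (fst B * r * sin t1 + snd B * r * cos t1)) by ring.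
         apply (is_RInt_derive (V:=R_CompleteNormedModule) (fun t => fst B * r * sin t + snd B * r * cos t)
                  (fun t => fst B * r * cos t - snd B * r * sin t)).
         - intros x _. auto_derive; auto. ring.
         - intros x _. apply (ex_derive_continuous (K:=R_AbsRing) (V:=R_NormedModule)). auto_derive; auto. }
    intros x _. unfold zp, ep. destruct B; destruct c; simpl. ring.
  - eapply is_RInt_ext.
    2: { replace (- fst B * r * (cos t2 - cos t1) + snd B * r * (sin t2 - sin t1))
           with ((- fst B * r * cos t2 + snd B * r * sin t2) - (- fst B * r * cos t1 + snd B * r * sin t1)) by ring.
         apply (is_RInt_derive (V:=R_CompleteNormedModule) (fun t => - fst B * r * cos t + snd B * r * sin t)
                  (fun t => fst B * r * sin t + snd B * r * cos t)).
         - intros x _. auto_derive; auto. ring.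
         - intros x _. apply (ex_derive_continuous (K:=R_AbsRing) (V:=R_NormedModule)). auto_derive; auto. }
    intros x _. unfold zp, ep. destruct B; destruct c; simpl. ring.
Qed.

Lemma CInt_lin_r (B c : C) t r1 r2 : 0 < r1 -> r1 <= r2 ->
  CInt (fun r => sc (/ r) (B * (zp c r t - c))%C) r1 r2 = ((r2 - r1) * (fst B * cos t - snd B * sin t),
      (r2 - r1) * (fst B * sin t + snd B * cos t)).
Proof.
  intros Hr1 Hr. unfold CInt. apply (is_RInt_unique (V:=C_R_CompleteNormedModule)).
  eapply is_RInt_ext.
  2: { apply (is_RInt_const (V:=C_R_CompleteNormedModule) r1 r2 (B * ep t)%C). }
  intros x Hx. rewrite Rmin_left, Rmax_right in Hx by lra.
  rewrite scalC. unfold zp, ep. destruct B, c. unfold Cmult, Cplus, Cminus, Copp, RtoC; simpl.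
  apply injective_projections; simpl; field; lra.
Qed.

Lemma Ccont_const K0 z : Ccont (fun _ => K0) z.
Proof. intros eps Heps; exists 1; split; [lra|]; intros w _.
  cbv beta. unfold Cminus. rewrite Cplus_opp_r, Cmod_0. lra. Qed.

Lemma Ccont_lin (K0 B c : C) z : Ccont (fun z => K0 + B * (z - c))%C z.
Proof. intros eps Heps. pose proof (Cmod_ge_0 B). exists (eps / (Cmod B + 1)). split.
  apply Rdiv_lt_0_compat; lra. intros w Hw.
  replace (K0 + B * (w - c) - (K0 + B * (z - c)))%C with (B * (w - z))%C by ring.
  rewrite Cmod_mult. pose proof (Cmod_ge_0 (w - z)).
  apply (Rmult_lt_compat_r (Cmod B + 1)) in Hw; [|lra].
  unfold Rdiv in Hw. rewrite Rmult_assoc, Rinv_l, Rmult_1_r in Hw by lra. nra.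
Qed.

Lemma IP_lin (K0 B c : C) r1 r2 t1 t2 : 0 < r1 -> r1 <= r2 -> t1 <= t2 ->
  IP (fun z => K0 + B * (z - c))%C c r1 r2 t1 t2 = 0%C.
Proof.
  intros Hr1 Hr Ht.
  rewrite (IP_plus (fun _ => K0) (fun z => B * (z - c))%C); auto.
  2: intros r t _ _; apply Ccont_const.
  2: { intros r t _ _. pose proof (Ccont_lin 0 B c (zp c r t)) as K.
       intros eps Heps. destruct (K eps Heps) as [d [Hd Hd']]. exists d. split; auto.
       intros w Hw. specialize (Hd' w Hw). replace (B * (w - c) - B * (zp c r t - c))%C
       with (0 + B * (w - c) - (0 + B * (zp c r t - c)))%C by ring. exact Hd'. }
  unfold IP, Tt, Sr. rewrite !CInt_lin_t, !CInt_lin_r by auto.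
  set (u := CInt (fun _ => K0) t1 t2). set (v := CInt (fun r => sc (/ r) K0) r1 r2).
  destruct u, v.
  unfold Ci, Cmult, Cplus, Cminus, Copp; simpl. apply injective_projections; simpl; ring.
Qed.

Lemma Cmod_4 (a b s s' : C) : Cmod ((a - b) + Ci * (s - s'))%C <= Cmod a + Cmod b + Cmod s + Cmod s'.
Proof.
  eapply Rle_trans. apply Cmod_triangle.
  assert (Cmod (a - b) <= Cmod a + Cmod b).
  { unfold Cminus. eapply Rle_trans. apply Cmod_triangle. rewrite Cmod_opp. lra. }
  assert (Cmod (s - s') <= Cmod s + Cmod s').
  { unfold Cminus. eapply Rle_trans. apply Cmod_triangle. rewrite Cmod_opp. lra. }
  rewrite Cmod_mult. replace (Cmod Ci) with 1. lra.
  unfold Cmod, Ci; cbn [fst snd]. replace (0 ^ 2 + 1 ^ 2) with 1 by ring. rewrite sqrt_1. reflexivity.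
Qed.

Lemma IP_bound H c r1 r2 t1 t2 M : 0 < r1 -> r1 <= r2 -> t1 <= t2 -> Creg H c r1 r2 t1 t2 ->
  (forall r t, r1 <= r <= r2 -> t1 <= t <= t2 -> Cmod (H (zp c r t)) <= M) ->
  Cmod (IP H c r1 r2 t1 t2) <= 2 * (t2 - t1) * M + 2 * (r2 - r1) * (M / r1).
Proof.
  intros Hr1 Hr Ht HC HM. unfold IP. eapply Rle_trans. apply Cmod_4.
  assert (HT : forall r, r1 <= r <= r2 -> Cmod (Tt H c r t1 t2) <= (t2 - t1) * M).
  { intros r Hr'. apply CInt_bound. lra. eapply Creg_Tex; [eassumption|..]; lra.
    intros t Ht'. apply HM; auto. }
  assert (HS : forall t, t1 <= t <= t2 -> Cmod (Sr H c t r1 r2) <= (r2 - r1) * (M / r1)).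
  { intros t Ht'. apply CInt_bound. lra. eapply Creg_Sex; [|eassumption|..]; lra.
    intros r Hr'. rewrite scalC, Cmod_mult, Cmod_R, Rabs_pos_eq.
    2: { apply Rlt_le, Rinv_0_lt_compat; lra. }
    pose proof (HM r t Hr' Ht'). pose proof (Cmod_ge_0 (H (zp c r t))).
    unfold Rdiv. rewrite Rmult_comm. 
    apply Rle_trans with (M * / r). apply Rmult_le_compat_r. apply Rlt_le, Rinv_0_lt_compat; lra. auto.
    apply Rmult_le_compat_l. lra. apply Rinv_le_contravar; lra. }
  pose proof (HT r1 ltac:(lra)). pose proof (HT r2 ltac:(lra)).
  pose proof (HS t1 ltac:(lra)). pose proof (HS t2 ltac:(lra)). lra.
Qed.


Record box := mkbox { br1 : R; br2 : R; bt1 : R; bt2 : R }.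

Definition q1 (Q : box) := mkbox (br1 Q) ((br1 Q + br2 Q)/2) (bt1 Q) ((bt1 Q + bt2 Q)/2).
Definition q2 (Q : box) := mkbox (br1 Q) ((br1 Q + br2 Q)/2) ((bt1 Q + bt2 Q)/2) (bt2 Q).
Definition q3 (Q : box) := mkbox ((br1 Q + br2 Q)/2) (br2 Q) (bt1 Q) ((bt1 Q + bt2 Q)/2).
Definition q4 (Q : box) := mkbox ((br1 Q + br2 Q)/2) (br2 Q) ((bt1 Q + bt2 Q)/2) (bt2 Q).

Section Bisect.
Variable f : box -> C.
Variable valid : box -> Prop.
Hypothesis fsplit : forall Q, valid Q -> f Q = (f (q1 Q) + f (q2 Q) + f (q3 Q) + f (q4 Q))%C.
Hypothesis vsub : forall Q, valid Q -> valid (q1 Q) /\ valid (q2 Q) /\ valid (q3 Q) /\ valid (q4 Q).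

Definition step (Q : box) : box :=
  if Rle_dec (Cmod (f Q) / 4) (Cmod (f (q1 Q))) then q1 Q else
  if Rle_dec (Cmod (f Q) / 4) (Cmod (f (q2 Q))) then q2 Q else
  if Rle_dec (Cmod (f Q) / 4) (Cmod (f (q3 Q))) then q3 Q else q4 Q.

Lemma step_prop Q : valid Q ->
  Cmod (f Q) / 4 <= Cmod (f (step Q)) /\
  (step Q = q1 Q \/ step Q = q2 Q \/ step Q = q3 Q \/ step Q = q4 Q).
Proof.
  intros HV. unfold step.
  destruct (Rle_dec _ (Cmod (f (q1 Q)))); [split; auto|].
  destruct (Rle_dec _ (Cmod (f (q2 Q)))); [split; auto|].
  destruct (Rle_dec _ (Cmod (f (q3 Q)))); [split; auto|].
  split; auto.
  pose proof (fsplit Q HV) as E.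
  assert (Cmod (f Q) <= Cmod (f (q1 Q)) + Cmod (f (q2 Q)) + Cmod (f (q3 Q)) + Cmod (f (q4 Q))).
  { rewrite E. eapply Rle_trans. apply Cmod_triangle. eapply Rplus_le_compat_r.
    eapply Rle_trans. apply Cmod_triangle. eapply Rplus_le_compat_r. apply Cmod_triangle. }
  lra.
Qed.

Fixpoint seqQ (Q0 : box) (n : nat) : box :=
  match n with O => Q0 | S n => step (seqQ Q0 n) end.

Lemma step_q Q : step Q = q1 Q \/ step Q = q2 Q \/ step Q = q3 Q \/ step Q = q4 Q.
Proof. unfold step. repeat destruct Rle_dec; auto. Qed.

Lemma seqQ_valid Q0 n : valid Q0 -> valid (seqQ Q0 n).
Proof.
  intros HV. induction n; simpl; auto.
  destruct (step_prop _ IHn) as [_ [E|[E|[E|E]]]]; rewrite E; apply (vsub _ IHn).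
Qed.

Lemma seqQ_mod Q0 n : valid Q0 -> Cmod (f Q0) * (/4) ^ n <= Cmod (f (seqQ Q0 n)).
Proof.
  intros HV. induction n; simpl. lra.
  destruct (step_prop _ (seqQ_valid Q0 n HV)) as [H _]. lra.
Qed.

Lemma seqQ_geom Q0 n :
  br2 (seqQ Q0 n) - br1 (seqQ Q0 n) = (br2 Q0 - br1 Q0) * (/2) ^ n /\
  bt2 (seqQ Q0 n) - bt1 (seqQ Q0 n) = (bt2 Q0 - bt1 Q0) * (/2) ^ n.
Proof.
  induction n; simpl. split; ring.
  destruct IHn as [I1 I2].
  destruct (step_q (seqQ Q0 n)) as [E|[E|[E|E]]]; rewrite E; unfold q1,q2,q3,q4; simpl; split; lra.
Qed.

Lemma seqQ_mono Q0 n : br1 Q0 <= br2 Q0 -> bt1 Q0 <= bt2 Q0 ->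
  br1 (seqQ Q0 n) <= br1 (seqQ Q0 (S n)) /\ br2 (seqQ Q0 (S n)) <= br2 (seqQ Q0 n) /\
  bt1 (seqQ Q0 n) <= bt1 (seqQ Q0 (S n)) /\ bt2 (seqQ Q0 (S n)) <= bt2 (seqQ Q0 n).
Proof.
  intros H1 H2.
  assert (br1 (seqQ Q0 n) <= br2 (seqQ Q0 n) /\ bt1 (seqQ Q0 n) <= bt2 (seqQ Q0 n)) as [A1 A2].
  { destruct (seqQ_geom Q0 n) as [G1 G2]. pose proof (pow_le (/2) n ltac:(lra)). split; nra. }
  simpl. destruct (step_q (seqQ Q0 n)) as [E|[E|[E|E]]]; rewrite E; unfold q1,q2,q3,q4; simpl; lra.
Qed.
Lemma seqQ_nest Q0 n m : br1 Q0 <= br2 Q0 -> bt1 Q0 <= bt2 Q0 -> (n <= m)%nat ->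
  br1 (seqQ Q0 n) <= br1 (seqQ Q0 m) /\ br2 (seqQ Q0 m) <= br2 (seqQ Q0 n) /\
  bt1 (seqQ Q0 n) <= bt1 (seqQ Q0 m) /\ bt2 (seqQ Q0 m) <= bt2 (seqQ Q0 n).
Proof.
  intros H1 H2 Hnm. induction Hnm. lra.
  pose proof (seqQ_mono Q0 m H1 H2). lra.
Qed.

Lemma seqQ_ord Q0 n : br1 Q0 <= br2 Q0 -> bt1 Q0 <= bt2 Q0 ->
  br1 (seqQ Q0 n) <= br2 (seqQ Q0 n) /\ bt1 (seqQ Q0 n) <= bt2 (seqQ Q0 n).
Proof.
  intros H1 H2. destruct (seqQ_geom Q0 n) as [G1 G2]. pose proof (pow_le (/2) n ltac:(lra)). split; nra.
Qed.

Lemma seqQ_cross Q0 n m : br1 Q0 <= br2 Q0 -> bt1 Q0 <= bt2 Q0 ->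
  br1 (seqQ Q0 n) <= br2 (seqQ Q0 m) /\ bt1 (seqQ Q0 n) <= bt2 (seqQ Q0 m).
Proof.
  intros H1 H2. destruct (Nat.le_ge_cases n m) as [Hnm|Hnm].
  - pose proof (seqQ_nest Q0 n m H1 H2 Hnm). pose proof (seqQ_ord Q0 m H1 H2). lra.
  - pose proof (seqQ_nest Q0 m n H1 H2 Hnm). pose proof (seqQ_ord Q0 n H1 H2). lra.
Qed.

Lemma seqQ_lim Q0 : br1 Q0 <= br2 Q0 -> bt1 Q0 <= bt2 Q0 ->
  exists u v, forall n, br1 (seqQ Q0 n) <= u <= br2 (seqQ Q0 n) /\ bt1 (seqQ Q0 n) <= v <= bt2 (seqQ Q0 n).
Proof.
  intros H1 H2.
  destruct (completeness (fun x => exists n, x = br1 (seqQ Q0 n))) as [u [Hu1 Hu2]].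
  { exists (br2 Q0). intros x [n ->]. apply (seqQ_cross Q0 n 0 H1 H2). }
  { exists (br1 Q0). exists 0%nat. reflexivity. }
  destruct (completeness (fun x => exists n, x = bt1 (seqQ Q0 n))) as [v [Hv1 Hv2]].
  { exists (bt2 Q0). intros x [n ->]. apply (seqQ_cross Q0 n 0 H1 H2). }
  { exists (bt1 Q0). exists 0%nat. reflexivity. }
  exists u, v. intros n. repeat split.
  - apply Hu1. exists n; auto.
  - apply Hu2. intros x [m ->]. apply (seqQ_cross Q0 m n H1 H2).
  - apply Hv1. exists n; auto.
  - apply Hv2. intros x [m ->]. apply (seqQ_cross Q0 m n H1 H2).
Qed.
End Bisect.


Lemma IP_ext H1 H2 c r1 r2 t1 t2 : (forall z, H1 z = H2 z) -> IP H1 c r1 r2 t1 t2 = IP H2 c r1 r2 t1 t2.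
Proof. intros E. assert (H1 = H2) by (apply functional_extensionality; auto). subst; auto. Qed.

Lemma Ccont_minus H1 H2 z : Ccont H1 z -> Ccont H2 z -> Ccont (fun w => H1 w - H2 w)%C z.
Proof.
  intros C1 C2 eps Heps. destruct (C1 (eps/2) ltac:(lra)) as [d1 [Hd1 D1]].
  destruct (C2 (eps/2) ltac:(lra)) as [d2 [Hd2 D2]].
  exists (Rmin d1 d2). split. apply Rmin_pos; auto. intros w Hw.
  specialize (D1 w (Rlt_le_trans _ _ _ Hw (Rmin_l _ _))).
  specialize (D2 w (Rlt_le_trans _ _ _ Hw (Rmin_r _ _))).
  replace (H1 w - H2 w - (H1 z - H2 z))%C with ((H1 w - H1 z) + - (H2 w - H2 z))%C by ring.
  eapply Rle_lt_trans. apply Cmod_triangle. rewrite Cmod_opp. lra.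
Qed.

Section G.
Variables (H : C -> C) (c : C) (R0 : R).
Hypothesis hol : forall z, Cmod (z - c) < R0 -> ex_derive (K:=C_AbsRing) (V:=C_NormedModule) H z.

Lemma Creg_hol r1 r2 t1 t2 : 0 < r1 -> r2 < R0 -> Creg H c r1 r2 t1 t2.
Proof.
  intros Hr1 Hr2 r t Hr Ht. apply hol_cont. apply hol. rewrite zp_c. rewrite Rabs_pos_eq; lra.
Qed.

Theorem goursat r1 r2 t1 t2 : 0 < r1 -> r1 <= r2 -> r2 < R0 -> t1 <= t2 -> IP H c r1 r2 t1 t2 = 0%C.
Proof.
  intros Hr1 Hr Hr2 Ht.
  set (f := fun Q => IP H c (br1 Q) (br2 Q) (bt1 Q) (bt2 Q)).
  set (valid := fun Q => r1 <= br1 Q /\ br1 Q <= br2 Q /\ br2 Q <= r2 /\ bt1 Q <= bt2 Q).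
  assert (fsplit : forall Q, valid Q -> f Q = (f (q1 Q) + f (q2 Q) + f (q3 Q) + f (q4 Q))%C).
  { intros [a b x y] [V1 [V2 [V3 V4]]]. unfold f, q1, q2, q3, q4; simpl in *.
    rewrite (IP_split_r H c a b x y ((a+b)/2)); try lra.
    rewrite (IP_split_t H c a ((a+b)/2) x y ((x+y)/2)); try lra.
    rewrite (IP_split_t H c ((a+b)/2) b x y ((x+y)/2)); try lra. ring.
    all: apply Creg_hol; lra. }
  assert (vsub : forall Q, valid Q -> valid (q1 Q) /\ valid (q2 Q) /\ valid (q3 Q) /\ valid (q4 Q)).
  { intros [a b x y] [V1 [V2 [V3 V4]]]. unfold valid, q1, q2, q3, q4; simpl in *. lra. }
  set (Q0 := mkbox r1 r2 t1 t2).
  assert (HV0 : valid Q0) by (unfold valid, Q0; simpl; lra).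
  destruct (classic (IP H c r1 r2 t1 t2 = 0%C)) as [E|NE]; auto. exfalso.
  set (eta := Cmod (IP H c r1 r2 t1 t2)).
  assert (Heta : 0 < eta) by (apply Cmod_gt_0; auto).
  destruct (seqQ_lim f Q0 ltac:(simpl; lra) ltac:(simpl; lra)) as [u [v Huv]].
  assert (Hu : r1 <= u <= r2).
  { destruct (Huv 0%nat) as [A1 _]. simpl in A1. lra. }
  set (p := zp c u v).
  assert (Hp : ex_derive (K:=C_AbsRing) (V:=C_NormedModule) H p).
  { apply hol. unfold p. rewrite zp_c, Rabs_pos_eq; lra. }
  set (D := (r2 - r1) + 2 * R0 * (t2 - t1)).
  assert (HD : 0 <= D) by (unfold D; nra).
  set (K := 2 * D * ((t2 - t1) + (r2 - r1) / r1)).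
  assert (HK : 0 <= K).
  { unfold K. apply Rmult_le_pos. lra. apply Rplus_le_le_0_compat. lra. apply Rdiv_le_0_compat; lra. }
  set (eps := eta / (2 * (K + 1))).
  assert (Heps : 0 < eps) by (unfold eps; apply Rdiv_lt_0_compat; lra).
  assert (HepsK : eps * K < eta).
  { assert (E1 : eps * K = eta * (K / (2 * (K + 1)))) by (unfold eps; field; lra).
    assert (E2 : K / (2 * (K + 1)) < 1).
    { apply (Rmult_lt_reg_r (2 * (K + 1))); [lra|]. unfold Rdiv. rewrite Rmult_assoc, Rinv_l; lra. }
    rewrite E1. nra. }
  destruct (deriv_eps H p Hp) as [l Hl]. destruct (Hl eps Heps) as [d [Hd Hdl]].
  destruct (pow_lt_1_zero (/2) ltac:(rewrite Rabs_pos_eq; lra) (d / (D + 1)) ltac:(apply Rdiv_lt_0_compat; lra))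
    as [N HN].
  specialize (HN N (le_n N)). rewrite Rabs_pos_eq in HN by (apply pow_le; lra).
  set (h := (/2) ^ N). fold h in HN.
  assert (Hh : 0 < h) by (apply pow_lt; lra).
  assert (HDh : D * h < d).
  { apply Rmult_lt_compat_r with (r := D + 1) in HN; [|lra].
    unfold Rdiv in HN. rewrite Rmult_assoc, Rinv_l, Rmult_1_r in HN by lra. nra. }
  set (Qn := seqQ f Q0 N).
  pose proof (seqQ_mod f valid fsplit vsub Q0 N HV0) as Hlow. fold Qn in Hlow.
  destruct (seqQ_geom f Q0 N) as [G1 G2]. fold Qn in G1, G2. fold h in G1, G2. simpl in G1, G2.
  destruct (Huv N) as [[U1 U2] [V1 V2]]. fold Qn in U1, U2, V1, V2.
  pose proof (seqQ_valid f valid fsplit vsub Q0 N HV0) as HVn. fold Qn in HVn.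
  destruct HVn as [W1 [W2 [W3 W4]]].
  set (K0 := (H p + l * (c - p))%C).
  set (L := fun z => (K0 + l * (z - c))%C).
  set (E := fun z => (H z - L z)%C).
  assert (Hf : f Qn = IP E c (br1 Qn) (br2 Qn) (bt1 Qn) (bt2 Qn)).
  { unfold f. rewrite (IP_ext H (fun z => E z + L z)%C). 
    rewrite IP_plus. unfold L. rewrite IP_lin. ring.
    all: try lra.
    - intros r t Hr' Ht'. apply Ccont_minus. apply Creg_hol with r1 r2 (bt1 Qn) (bt2 Qn); lra. apply Ccont_lin.
    - intros r t Hr' Ht'. apply Ccont_lin.
    - intros z. unfold E. ring. }
  assert (Hup : Cmod (f Qn) <= eps * K * (/4) ^ N).
  { rewrite Hf. eapply Rle_trans. apply IP_bound; try lra.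
    - intros r t Hr' Ht'. apply Ccont_minus. apply Creg_hol with r1 r2 (bt1 Qn) (bt2 Qn); lra. apply Ccont_lin.
    - intros r t Hr' Ht'. 
      assert (Hz : Cmod (zp c r t - p) <= D * h).
      { unfold p. eapply Rle_trans. apply zp_lip. rewrite (Rabs_pos_eq u) by lra.
        unfold D. 
        assert (Rabs (r - u) <= (r2 - r1) * h) by (apply Rabs_le; lra).
        assert (Rabs (t - v) <= (t2 - t1) * h) by (apply Rabs_le; lra).
        assert (u <= R0) by lra. pose proof (Rabs_pos (t - v)). nra. }
      pose proof (Hdl (zp c r t) ltac:(lra)).
      unfold E, L, K0. 
      replace (H (zp c r t) - (H p + l * (c - p) + l * (zp c r t - c)))%C
        with (H (zp c r t) - H p - l * (zp c r t - p))%C by ring.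
      eapply Rle_trans. eassumption. apply Rmult_le_compat_l. lra. exact Hz.
    - assert (H4 : (/4) ^ N = h * h) by (unfold h; rewrite <- Rpow_mult_distr; f_equal; field).
      rewrite H4, G1, G2.
      assert (Hq : (r2 - r1) / br1 Qn <= (r2 - r1) / r1).
      { unfold Rdiv. apply Rmult_le_compat_l. lra. apply Rinv_le_contravar; lra. }
      unfold K.
      replace (2 * ((t2 - t1) * h) * (eps * (D * h)) + 2 * ((r2 - r1) * h) * (eps * (D * h) / br1 Qn))
        with (eps * (2 * D) * (h * h) * ((t2 - t1) + (r2 - r1) / br1 Qn)) by (field; lra).
      replace (eps * (2 * D * (t2 - t1 + (r2 - r1) / r1)) * (h * h))
        with (eps * (2 * D) * (h * h) * ((t2 - t1) + (r2 - r1) / r1)) by ring.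
      apply Rmult_le_compat_l. apply Rmult_le_pos. apply Rmult_le_pos; lra. nra. lra. }
  assert (Ef : Cmod (f Q0) = eta) by reflexivity. rewrite Ef in Hlow.
  assert (H4 : 0 < (/4) ^ N) by (apply pow_lt; lra).
  nra.
Qed.
End G.


Lemma CInt_minus f g a b : CexI f a b -> CexI g a b ->
  CInt (fun t => f t - g t)%C a b = (CInt f a b - CInt g a b)%C.
Proof. intros Hf Hg. unfold CInt. apply (RInt_minus (V:=C_R_CompleteNormedModule) f g a b Hf Hg). Qed.

Lemma CInt_const (k : C) a b : CInt (fun _ => k) a b = (RtoC (b - a) * k)%C.
Proof. unfold CInt. rewrite (RInt_const (V:=C_R_CompleteNormedModule)). apply scalC. Qed.

Lemma ep_2PI : ep (2 * PI) = ep 0.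
Proof. unfold ep. rewrite cos_2PI, sin_2PI, cos_0, sin_0. reflexivity. Qed.

Definition Phi H c r := Tt H c r 0 (2 * PI).

Section MV.
Variables (H : C -> C) (c : C) (R0 : R).
Hypothesis hol : forall z, Cmod (z - c) < R0 -> ex_derive (K:=C_AbsRing) (V:=C_NormedModule) H z.

Lemma Phi_const r1 r2 : 0 < r1 -> r1 <= r2 -> r2 < R0 -> Phi H c r1 = Phi H c r2.
Proof.
  intros H1 H2 H3. pose proof (goursat H c R0 hol r1 r2 0 (2 * PI) H1 H2 H3 ltac:(pose proof PI_RGT_0; lra)) as G.
  unfold IP in G.
  assert (E : Sr H c (2 * PI) r1 r2 = Sr H c 0 r1 r2).
  { unfold Sr. f_equal. apply functional_extensionality. intros r. unfold zp. rewrite ep_2PI. reflexivity. }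
  rewrite E in G. unfold Phi.
  set (a := Tt H c r1 0 (2 * PI)) in *. set (b := Tt H c r2 0 (2 * PI)) in *.
  set (s := Sr H c 0 r1 r2) in *.
  replace b with (b - a + Ci * (s - s) + a)%C by ring. rewrite G. ring.
Qed.

Lemma Phi_center r : 0 < r -> r < R0 -> Phi H c r = (RtoC (2 * PI) * H c)%C.
Proof.
  intros H1 H2.
  assert (HP : 0 < PI) by apply PI_RGT_0.
  assert (Hc : Ccont H c) by (apply hol_cont, hol; unfold Cminus; rewrite Cplus_opp_r, Cmod_0; lra).
  destruct (classic (Phi H c r = (RtoC (2 * PI) * H c)%C)) as [E|NE]; auto. exfalso.
  set (eta := Cmod (Phi H c r - RtoC (2 * PI) * H c)).
  assert (Heta : 0 < eta).
  { apply Cmod_gt_0. intros Z. apply NE. replace (Phi H c r) with ((Phi H c r - RtoC (2 * PI) * H c) + RtoC (2 * PI) * H c)%C by ring.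
    rewrite Z. ring. }
  destruct (Hc (eta / (4 * PI)) ltac:(apply Rdiv_lt_0_compat; lra)) as [d [Hd Hdd]].
  set (r' := Rmin r (d / 2)).
  assert (Hr' : 0 < r' <= r) by (split; [apply Rmin_pos; lra | apply Rmin_l]).
  assert (Hr'd : r' < d) by (unfold r'; eapply Rle_lt_trans; [apply Rmin_r| lra]).
  assert (B : Cmod (Phi H c r' - RtoC (2 * PI) * H c) <= (2 * PI - 0) * (eta / (4 * PI))).
  { unfold Phi, Tt. replace (RtoC (2 * PI) * H c)%C with (CInt (fun _ => H c) 0 (2 * PI)).
    2: { rewrite CInt_const. f_equal. f_equal. ring. }
    rewrite <- CInt_minus.
    - apply CInt_bound. lra.
      + apply CexI_cont. lra. intros t _. 
        pose proof (@continuous_minus R_UniformSpace R_AbsRing C_R_NormedModule (fun t => H (zp c r' t)) (fun _ => H c) t) as K.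
        apply K. apply cont_theta. apply hol_cont, hol. rewrite zp_c, Rabs_pos_eq; lra.
        apply continuous_const.
      + intros t _. left. apply Hdd. rewrite zp_c, Rabs_pos_eq; lra.
    - apply CexI_cont. lra. intros t _. apply cont_theta. apply hol_cont, hol. rewrite zp_c, Rabs_pos_eq; lra.
    - apply CexI_cont. lra. intros t _. apply continuous_const. }
  rewrite (Phi_const r' r) in B; try lra.
  fold eta in B. replace ((2 * PI - 0) * (eta / (4 * PI))) with (eta / 2) in B by (field; lra). lra.
Qed.
End MV.

Definition CcontD (H : C -> C) (c : C) (r : R) (z : C) :=
  forall eps, 0 < eps -> exists d, 0 < d /\ forall w, Cmod (w - c) <= r -> Cmod (w - z) < d -> Cmod (H w - H z) < eps.

Theorem maxmod (H : C -> C) (c : C) (r K : R) : 0 < r ->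
  (forall z, Cmod (z - c) < r -> ex_derive (K:=C_AbsRing) (V:=C_NormedModule) H z) ->
  (forall z, Cmod (z - c) <= r -> CcontD H c r z) ->
  (forall t, 0 <= t <= 2 * PI -> Cmod (H (zp c r t)) <= K) ->
  Cmod (H c) <= K.
Proof.
  intros Hr hol HD HK.
  assert (HP : 0 < PI) by apply PI_RGT_0.
  apply le_epsilon. intros e He.
  assert (Hex : forall t, exists d : posreal, forall w, Cmod (w - c) <= r -> Cmod (w - zp c r t) < d ->
     Cmod (H w - H (zp c r t)) < e / 2).
  { intros t. destruct (HD (zp c r t) ltac:(rewrite zp_c, Rabs_pos_eq; lra) (e/2) ltac:(lra)) as [d [Hd Hdd]].
    exists (mkposreal d Hd). exact Hdd. }
  set (dl := fun t => proj1_sig (constructive_indefinite_description _ (Hex t))).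
  assert (Hdl : forall t w, Cmod (w - c) <= r -> Cmod (w - zp c r t) < dl t -> Cmod (H w - H (zp c r t)) < e / 2).
  { intros t. unfold dl. destruct (constructive_indefinite_description _ (Hex t)) as [x Hx]. exact Hx. }
  assert (Hpos : forall t, 0 < dl t / (2 * r + 2)).
  { intros t. apply Rdiv_lt_0_compat. apply cond_pos. lra. }
  destruct (compactness_value_1d 0 (2 * PI) (fun t => mkposreal _ (Hpos t))) as [d0 Hd0].
  pose proof (cond_pos d0) as Hd0p.
  set (rho := Rmax (r / 2) (r - d0 / 2)).
  assert (Hrho : 0 < rho < r /\ r - rho < d0).
  { unfold rho. destruct (Rle_dec (r/2) (r - d0/2)).
    - rewrite Rmax_right by lra. lra.
    - rewrite Rmax_left by lra. lra. }
  assert (Hb : forall x, 0 <= x <= 2 * PI -> Cmod (H (zp c rho x)) <= K + e).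
  { intros x Hx. destruct (NNPP _ (Hd0 x Hx)) as [t0 [Ht0 [Hxt Hdt]]]. simpl in Hxt, Hdt.
    pose proof (cond_pos (dl t0)).
    assert (A1 : Cmod (zp c rho x - zp c r t0) < dl t0).
    { eapply Rle_lt_trans. apply zp_lip. rewrite (Rabs_pos_eq r) by lra.
      rewrite Rabs_minus_sym, Rabs_pos_eq by lra.
      apply Rlt_le_trans with (d0 + 2 * r * (dl t0 / (2 * r + 2))).
      apply Rplus_lt_le_compat. lra. apply Rmult_le_compat_l. lra. lra.
      apply Rle_trans with (dl t0 / (2 * r + 2) + 2 * r * (dl t0 / (2 * r + 2))). lra.
      apply Rmult_le_reg_r with (2 * r + 2). lra.
      field_simplify; try lra; try nra. }
    assert (A2 : Cmod (zp c r x - zp c r t0) < dl t0).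
    { eapply Rle_lt_trans. apply zp_lip. rewrite (Rabs_pos_eq r) by lra.
      rewrite Rminus_diag, Rabs_R0.
      apply Rle_lt_trans with (2 * r * (dl t0 / (2 * r + 2))).
      rewrite Rplus_0_l. apply Rmult_le_compat_l. lra. lra.
      apply Rmult_lt_reg_r with (2 * r + 2). lra.
      field_simplify; try lra; try nra. }
    pose proof (Hdl t0 (zp c rho x) ltac:(rewrite zp_c, Rabs_pos_eq; lra) A1) as B1.
    pose proof (Hdl t0 (zp c r x) ltac:(rewrite zp_c, Rabs_pos_eq; lra) A2) as B2.
    pose proof (HK x Hx) as B3.
    replace (H (zp c rho x)) with ((H (zp c rho x) - H (zp c r t0)) + - (H (zp c r x) - H (zp c r t0)) + H (zp c r x))%C by ring.
    eapply Rle_trans. apply Cmod_triangle. eapply Rle_trans. apply Rplus_le_compat_r. apply Cmod_triangle.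
    rewrite Cmod_opp. lra. }
  assert (Hphi : Cmod (Phi H c rho) <= (2 * PI - 0) * (K + e)).
  { apply CInt_bound. lra. apply CexI_cont. lra. intros t _. apply cont_theta. apply hol_cont, hol.
    rewrite zp_c, Rabs_pos_eq; lra. exact Hb. }
  rewrite (Phi_center H c r hol rho) in Hphi by lra.
  rewrite Cmod_mult, Cmod_R, Rabs_pos_eq in Hphi by lra.
  nra.
Qed.


Fixpoint prodR (n : nat) (f : nat -> R) : R :=
  match n with O => 1 | S n => prodR n f * f n end.

Lemma prodR_ext n f g : (forall j, (j < n)%nat -> f j = g j) -> prodR n f = prodR n g.
Proof. induction n; simpl; intros; auto. rewrite IHn, H; auto. Qed.

Lemma prodR_mult n f g : prodR n (fun j => f j * g j) = prodR n f * prodR n g.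
Proof. induction n; simpl. ring. rewrite IHn. ring. Qed.

Lemma prodR_const n k : prodR n (fun _ => k) = k ^ n.
Proof. induction n; simpl. ring. rewrite IHn. ring. Qed.

Lemma prodR_add a b f : prodR (a + b) f = prodR a f * prodR b (fun j => f (a + j)%nat).
Proof. induction b; simpl. rewrite Nat.add_0_r. ring. rewrite Nat.add_succ_r. simpl. rewrite IHb. ring. Qed.

Lemma prodR_S_left n f : prodR (S n) f = f O * prodR n (fun j => f (S j)).
Proof. induction n; simpl. ring. simpl in IHn. rewrite IHn. ring. Qed.

Lemma prodR_nonneg n f : (forall j, (j < n)%nat -> 0 <= f j) -> 0 <= prodR n f.
Proof. induction n; simpl; intros. lra. apply Rmult_le_pos; auto. Qed.

Lemma prodR_le n f g : (forall j, (j < n)%nat -> 0 <= f j <= g j) -> prodR n f <= prodR n g.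
Proof. induction n; simpl; intros. lra.
  apply Rmult_le_compat. apply prodR_nonneg; intros; apply H; lia. apply H; lia. apply IHn; intros; apply H; lia. apply H; lia. Qed.

Lemma prodR_abs n f : Rabs (prodR n f) = prodR n (fun j => Rabs (f j)).
Proof. induction n; simpl. apply Rabs_R1. rewrite Rabs_mult, IHn. auto. Qed.

Definition Pn (n : nat) (y : R) : R := prodR (n - 1) (fun j => sin (y + PI * INR (S j) / INR n)).

Lemma Pn_double m y : (1 <= m)%nat -> Pn (2 * m) y = cos y * Pn m (2 * y) * (/2) ^ (m - 1).
Proof.
  intros Hm. unfold Pn.
  replace (2 * m - 1)%nat with ((m - 1) + S (m - 1))%nat by lia.
  rewrite prodR_add. rewrite prodR_S_left.
  assert (HmR : 0 < INR m) by (apply lt_0_INR; lia).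
  replace (INR (2 * m)) with (2 * INR m) by (rewrite mult_INR; reflexivity).
  replace (sin (y + PI * INR (S (m - 1 + 0)) / (2 * INR m))) with (cos y).
  2: { replace (S (m - 1 + 0)) with m by lia. replace (y + PI * INR m / (2 * INR m)) with (y + PI / 2) by (field; lra).
       rewrite sin_plus, cos_PI2, sin_PI2. ring. }
  rewrite <- (prodR_const (m - 1) (/2)).
  transitivity (cos y * (prodR (m - 1) (fun j : nat => sin (y + PI * INR (S j) / (2 * INR m))) *
     prodR (m - 1) (fun j : nat => sin (y + PI * INR (S (m - 1 + S j)) / (2 * INR m))))). ring.
  rewrite Rmult_assoc. f_equal. rewrite <- !prodR_mult. apply prodR_ext. intros j Hj.
  replace (m - 1 + S j)%nat with (m + j)%nat by lia. rewrite !S_INR, plus_INR.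
  replace (y + PI * (INR m + INR j + 1) / (2 * INR m)) with ((y + PI * (INR j + 1) / (2 * INR m)) + PI / 2) by (field; lra).
  rewrite (sin_plus _ (PI / 2)), cos_PI2, sin_PI2.
  replace (2 * y + PI * (INR j + 1) / INR m) with (2 * (y + PI * (INR j + 1) / (2 * INR m))) by (field; lra).
  rewrite sin_2a. field.
Qed.

Lemma cos_ge_half y : Rabs y <= PI / 3 -> / 2 <= cos y.
Proof.
  intros Hy. pose proof PI_RGT_0.
  assert (E : cos y = cos (Rabs y)).
  { destruct (Rcase_abs y). rewrite Rabs_left by lra. rewrite cos_neg. auto. rewrite Rabs_pos_eq by lra. auto. }
  rewrite E. replace (/ 2) with (cos (PI / 3)) by (rewrite cos_PI3; field). apply cos_decr_1; try lra. apply Rabs_pos.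
Qed.

Lemma two_pow_pos k : (1 <= 2 ^ k)%nat.
Proof. induction k; simpl; lia. Qed.

Lemma Pn_bound k y : Rabs y <= PI / (2 * 2 ^ k) -> (/2) ^ (2 ^ k - 1)%nat <= Rabs (Pn (2 ^ k)%nat y).
Proof.
  revert y. induction k; intros y Hy.
  - simpl. unfold Pn. simpl. rewrite Rabs_R1. lra.
  - pose proof PI_RGT_0. pose proof (two_pow_pos k) as Hm.
    assert (Hk : 0 < 2 ^ k) by (apply pow_lt; lra).
    replace (2 ^ S k)%nat with (2 * 2 ^ k)%nat by (simpl; lia).
    rewrite Pn_double by auto. rewrite !Rabs_mult.
    assert (Hy' : Rabs y <= PI / 3).
    { eapply Rle_trans; [exact Hy|]. simpl. assert (1 <= 2 ^ k) by (apply pow_R1_Rle; lra).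
      unfold Rdiv. apply Rmult_le_compat_l; [lra|]. apply Rinv_le_contravar; lra. }
    assert (Hc : / 2 <= Rabs (cos y)).
    { pose proof (cos_ge_half y Hy'). rewrite Rabs_pos_eq; lra. }
    assert (HI : (/2) ^ (2 ^ k - 1)%nat <= Rabs (Pn (2 ^ k)%nat (2 * y))).
    { apply IHk. rewrite Rabs_mult, Rabs_pos_eq by lra. simpl in Hy.
      replace (PI / (2 * 2 ^ k)) with (2 * (PI / (2 * (2 * 2 ^ k)))) by (field; lra). lra. }
    rewrite (Rabs_pos_eq ((/2) ^ (2 ^ k - 1)%nat)) by (apply pow_le; lra).
    replace (2 * 2 ^ k - 1)%nat with (S ((2 ^ k - 1) + (2 ^ k - 1)))%nat by lia.
    rewrite <- tech_pow_Rmult, pow_add.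
    pose proof (pow_le (/2) (2 ^ k - 1) ltac:(lra)).
    assert (/ 2 * (/ 2) ^ (2 ^ k - 1)%nat <= Rabs (cos y) * Rabs (Pn (2 ^ k) (2 * y))).
    { apply Rmult_le_compat; lra. }
    nra.
Qed.

Lemma cosprod k t : Rabs t <= PI / 2 ^ k ->
  (/2) ^ (2 ^ k - 1)%nat <= prodR (2 ^ k - 1) (fun j => 1 - cos (t + 2 * PI * INR (S j) / INR (2 ^ k))).
Proof.
  intros Ht. pose proof PI_RGT_0. pose proof (two_pow_pos k).
  assert (Hn : 0 < INR (2 ^ k)) by (apply lt_0_INR; lia).
  rewrite (prodR_ext _ _ (fun j => 2 * (sin (t / 2 + PI * INR (S j) / INR (2 ^ k)) * sin (t / 2 + PI * INR (S j) / INR (2 ^ k))))).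
  2: { intros j _. replace (t + 2 * PI * INR (S j) / INR (2 ^ k)) with (2 * (t / 2 + PI * INR (S j) / INR (2 ^ k))) by (field; lra).
       rewrite cos_2a_sin. ring. }
  rewrite prodR_mult, prodR_mult, prodR_const. fold (Pn (2 ^ k) (t / 2)).
  assert (HP : (/2) ^ (2 ^ k - 1)%nat <= Rabs (Pn (2 ^ k) (t / 2))).
  { apply Pn_bound. assert (0 < 2 ^ k) by (apply pow_lt; lra).
    replace (t / 2) with (t * / 2) by reflexivity. rewrite Rabs_mult, (Rabs_pos_eq (/2)) by lra.
    replace (PI / (2 * 2 ^ k)) with ((PI / 2 ^ k) * / 2) by (field; lra). 
    apply Rmult_le_compat_r; lra. }
  assert (HP2 : (/2) ^ (2 ^ k - 1)%nat * (/2) ^ (2 ^ k - 1)%nat <= Pn (2 ^ k) (t / 2) * Pn (2 ^ k) (t / 2)).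
  { pose proof (pow_le (/2) (2 ^ k - 1) ltac:(lra)).
    assert (EE : Rabs (Pn (2 ^ k) (t / 2)) * Rabs (Pn (2 ^ k) (t / 2)) = Pn (2 ^ k) (t / 2) * Pn (2 ^ k) (t / 2)).
    { rewrite <- Rabs_mult. apply Rabs_pos_eq. apply Rle_0_sqr. }
    rewrite <- EE. apply Rmult_le_compat; lra. }
  assert (E : 2 ^ (2 ^ k - 1)%nat * ((/2) ^ (2 ^ k - 1)%nat * (/2) ^ (2 ^ k - 1)%nat) = (/2) ^ (2 ^ k - 1)%nat).
  { rewrite <- Rmult_assoc, <- Rpow_mult_distr. replace (2 * / 2) with 1 by field. rewrite pow1. ring. }
  rewrite <- E. apply Rmult_le_compat_l. apply pow_le; lra. exact HP2.
Qed.


Lemma conv1 (f : C -> C) x l : @is_derive C_AbsRing C_NormedModule f x l -> @is_derive C_AbsRing (AbsRing_NormedModule C_AbsRing) f x l.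
Proof. intros [H1 H2]. split. - destruct H1 as [A B C]. split; auto. - exact H2. Qed.
Lemma conv2 (f : C -> C) x l : @is_derive C_AbsRing (AbsRing_NormedModule C_AbsRing) f x l -> @is_derive C_AbsRing C_NormedModule f x l.
Proof. intros [H1 H2]. split. - destruct H1 as [A B C]. split; auto. - exact H2. Qed.

Definition rot (c w z : C) : C := (c + w * (z - c))%C.

Lemma rot_derive c w z : @is_derive C_AbsRing (AbsRing_NormedModule C_AbsRing) (rot c w) z w.
Proof.
  pose proof (@is_derive_plus C_AbsRing (AbsRing_NormedModule C_AbsRing) (fun _ => c) (fun z => scal (minus z c) w) z zero (scal (minus one zero) w)
    (@is_derive_const C_AbsRing (AbsRing_NormedModule C_AbsRing) c z)
    (@is_derive_scal_l C_AbsRing (AbsRing_NormedModule C_AbsRing) (fun z => minus z c) z (minus one zero) w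
      (@is_derive_minus C_AbsRing (AbsRing_NormedModule C_AbsRing) (fun z => z) (fun _ => c) z one zero (is_derive_id z) (@is_derive_const C_AbsRing (AbsRing_NormedModule C_AbsRing) c z)))) as K.
  assert (Ew : @plus (AbsRing_NormedModule C_AbsRing) zero (scal (minus one zero) w) = w).
  { unfold plus, scal, minus, opp, zero, one; simpl. unfold mult, plus; simpl. destruct w; unfold Cmult, Cplus, Copp; simpl.
    apply injective_projections; simpl; ring. }
  rewrite Ew in K. eapply is_derive_ext; [|exact K].
  intros t. unfold rot. simpl. unfold plus, scal, minus, opp; simpl. unfold mult, plus; simpl. destruct w, c, t; unfold Cmult, Cplus, Copp, Cminus; simpl.
    apply injective_projections; simpl; ring.
Qed.

Fixpoint prodC (n : nat) (f : nat -> C) : C :=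
  match n with O => RtoC 1 | S n => (prodC n f * f n)%C end.

Lemma Cmod_prodC n f : Cmod (prodC n f) = prodR n (fun j => Cmod (f j)).
Proof. induction n; simpl. apply Cmod_1. rewrite Cmod_mult, IHn. reflexivity. Qed.

Lemma prodC_derive n (F : nat -> C -> C) z :
  (forall j, (j < n)%nat -> ex_derive (K:=C_AbsRing) (V:=C_NormedModule) (F j) z) ->
  ex_derive (K:=C_AbsRing) (V:=C_NormedModule) (fun w => prodC n (fun j => F j w)) z.
Proof.
  induction n; intros HF; simpl.
  - exists zero. apply (@is_derive_const C_AbsRing C_NormedModule (RtoC 1) z).
  - destruct IHn as [l1 H1]. intros j Hj; apply HF; lia.
    destruct (HF n ltac:(lia)) as [l2 H2].
    eexists. apply conv2.
    apply (@is_derive_mult C_AbsRing (fun w => prodC n (fun j => F j w)) (F n) z l1 l2 (conv1 _ _ _ H1) (conv1 _ _ _ H2)).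
    intros; apply Cmult_comm.
Qed.

Lemma rot_comp_derive (g : C -> C) c w z :
  ex_derive (K:=C_AbsRing) (V:=C_NormedModule) g (rot c w z) ->
  ex_derive (K:=C_AbsRing) (V:=C_NormedModule) (fun z => g (rot c w z)) z.
Proof.
  intros [l Hl]. eexists. apply (is_derive_comp g (rot c w) z l w Hl (rot_derive c w z)).
Qed.

Lemma g_contD (g : C -> C) : cont_on_closed_disk g ->
  forall z, Cmod z <= 1 -> forall eps, 0 < eps -> exists d, 0 < d /\
    forall w, Cmod w <= 1 -> Cmod (w - z) < d -> Cmod (g w - g z) < eps.
Proof.
  intros Hg z Hz eps Heps. specialize (Hg z Hz).
  assert (HB : locally (g z) (fun y => Cmod (y - g z) < eps)).
  { exists (mkposreal (eps / 2) ltac:(lra)). intros y [B1 B2]. 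
    change (Rabs (fst y - fst (g z)) < eps / 2) in B1.
    change (Rabs (snd y - snd (g z)) < eps / 2) in B2.
    eapply Rle_lt_trans. apply Cmod_le_abs. simpl. unfold Rminus in B1, B2. lra. }
  specialize (Hg _ HB). destruct Hg as [d Hd].
  exists d. split. apply cond_pos. intros w Hw Hwz. apply Hd; auto.
  split.
  - change (Rabs (fst w - fst z) < d). eapply Rle_lt_trans; [|exact Hwz]. eapply Rle_trans; [|apply (Rabs_fst_le (w - z)%C)]. simpl. right. reflexivity.
  - change (Rabs (snd w - snd z) < d). eapply Rle_lt_trans; [|exact Hwz]. eapply Rle_trans; [|apply (Rabs_snd_le (w - z)%C)]. simpl. right. reflexivity.
Qed.

Lemma CcontD_mult H1 H2 c r z : CcontD H1 c r z -> CcontD H2 c r z -> CcontD (fun w => H1 w * H2 w)%C c r z.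
Proof.
  intros C1 C2 eps Heps.
  set (a := Cmod (H1 z)). set (b := Cmod (H2 z)).
  assert (Ha : 0 <= a) by apply Cmod_ge_0. assert (Hb : 0 <= b) by apply Cmod_ge_0.
  destruct (C1 (eps / (2 * (b + 1))) ltac:(apply Rdiv_lt_0_compat; lra)) as [d1 [Hd1 D1]].
  destruct (C2 (Rmin 1 (eps / (2 * (a + 1)))) ltac:(apply Rmin_pos; [lra| apply Rdiv_lt_0_compat; lra])) as [d2 [Hd2 D2]].
  exists (Rmin d1 d2). split. apply Rmin_pos; auto. intros w Hw Hwz.
  specialize (D1 w Hw (Rlt_le_trans _ _ _ Hwz (Rmin_l _ _))).
  specialize (D2 w Hw (Rlt_le_trans _ _ _ Hwz (Rmin_r _ _))).
  assert (E2a : Cmod (H2 w - H2 z) < 1) by (eapply Rlt_le_trans; [exact D2| apply Rmin_l]).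
  assert (E2b : Cmod (H2 w - H2 z) < eps / (2 * (a + 1))) by (eapply Rlt_le_trans; [exact D2| apply Rmin_r]).
  assert (HH2 : Cmod (H2 w) <= b + 1).
  { replace (H2 w) with ((H2 w - H2 z) + H2 z)%C by ring. eapply Rle_trans. apply Cmod_triangle. fold b. lra. }
  replace (H1 w * H2 w - H1 z * H2 z)%C with ((H1 w - H1 z) * H2 w + H1 z * (H2 w - H2 z))%C by ring.
  eapply Rle_lt_trans. apply Cmod_triangle. rewrite !Cmod_mult. fold a.
  pose proof (Cmod_ge_0 (H1 w - H1 z)). pose proof (Cmod_ge_0 (H2 w - H2 z)).
  assert (X1 : Cmod (H1 w - H1 z) * Cmod (H2 w) <= eps / (2 * (b + 1)) * (b + 1)).
  { apply Rmult_le_compat; try lra. apply Cmod_ge_0. }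
  assert (X2 : a * Cmod (H2 w - H2 z) <= (a + 1) * (eps / (2 * (a + 1)))).
  { apply Rmult_le_compat; lra. }
  replace (eps / (2 * (b + 1)) * (b + 1)) with (eps / 2) in X1 by (field; lra).
  replace ((a + 1) * (eps / (2 * (a + 1)))) with (eps / 2) in X2 by (field; lra).
  assert (X3 : Cmod (H1 w - H1 z) * Cmod (H2 w) < eps / 2).
  { pose proof (Cmod_ge_0 (H2 w)). destruct (Req_dec (Cmod (H2 w)) 0) as [Z|NZ].
    - rewrite Z. lra.
    - apply Rlt_le_trans with (eps / (2 * (b + 1)) * Cmod (H2 w)).
      apply Rmult_lt_compat_r; lra.
      apply Rle_trans with (eps / (2 * (b + 1)) * (b + 1)). apply Rmult_le_compat_l.
      apply Rlt_le, Rdiv_lt_0_compat; lra. lra.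
      right. field. lra. }
  lra.
Qed.

Lemma CcontD_prod n (F : nat -> C -> C) c r z : (forall j, (j < n)%nat -> CcontD (F j) c r z) ->
  CcontD (fun w => prodC n (fun j => F j w)) c r z.
Proof.
  induction n; intros HF; simpl.
  - intros eps Heps. exists 1. split. lra. intros. unfold Cminus. rewrite Cplus_opp_r, Cmod_0. lra.
  - apply (CcontD_mult (fun w => prodC n (fun j => F j w)) (F n)).
    apply IHn. intros; apply HF; lia. apply HF; lia.
Qed.

Lemma rot_contD (g : C -> C) c r w : cont_on_closed_disk g -> Cmod w = 1 ->
  (forall v, Cmod (v - c) <= r -> Cmod v <= 1) ->
  forall z, Cmod (z - c) <= r -> CcontD (fun v => g (rot c w v)) c r z.
Proof.
  intros Hg Hw Hdisk z Hz eps Heps.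
  assert (Hrot : forall v, Cmod (v - c) <= r -> Cmod (rot c w v) <= 1).
  { intros v Hv. apply Hdisk. unfold rot. replace (c + w * (v - c) - c)%C with (w * (v - c))%C by ring.
    rewrite Cmod_mult, Hw. lra. }
  destruct (g_contD g Hg (rot c w z) (Hrot z Hz) eps Heps) as [d [Hd Hdd]].
  exists d. split; auto. intros v Hv Hvz. apply Hdd. apply Hrot; auto.
  unfold rot. replace (c + w * (v - c) - (c + w * (z - c)))%C with (w * (v - z))%C by ring.
  rewrite Cmod_mult, Hw. lra.
Qed.


Lemma Cmod_zp d r p : Cmod (zp (RtoC d) r p) = sqrt ((d + r) ^ 2 - 2 * d * r * (1 - cos p)).
Proof.
  unfold Cmod, zp, ep. f_equal. simpl. pose proof (sin2_cos2 p). unfold Rsqr in H. nra.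
Qed.

Lemma factor_bound (d r lam M : R) (g : C -> C) p :
  0 < d -> d <= 1/4 -> 0 < r -> d + r <= 1 -> 1 <= lam -> 1 <= M ->
  (forall gamma : R, 0 < gamma -> gamma <= 1 - d ->
       forall z : C, Cmod z <= 1 - gamma -> Cmod (g z) <= lam * M / gamma) ->
  0 < 1 - cos p ->
  Cmod (g (zp (RtoC d) r p)) <= (8 * lam * M / d) / (1 - cos p).
Proof.
  intros Hd Hd4 Hr Hdr Hl HM Hg Hp.
  pose proof (COS_bound p) as Hcb.
  assert (HlM : 1 <= lam * M) by nra.
  destruct (Rle_dec (1/4) r) as [Hr4|Hr4].
  - set (gam := d * r * (1 - cos p)).
    assert (Hg0 : 0 < gam) by (unfold gam; apply Rmult_lt_0_compat; nra).
    assert (Hg1 : gam <= 1 - d).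
    { unfold gam. assert (0 < d * r) by nra.
      assert (d * r * (1 - cos p) <= d * r * 2) by (apply Rmult_le_compat_l; lra).
      assert (d * r <= d * (1 - d)) by (apply Rmult_le_compat_l; lra). nra. }
    eapply Rle_trans. apply (Hg gam Hg0 Hg1).
    + rewrite Cmod_zp. rewrite <- (sqrt_pow2 (1 - gam)) by lra. apply sqrt_le_1_alt.
      replace (2 * d * r * (1 - cos p)) with (2 * gam) by (unfold gam; ring).
      assert ((d + r) ^ 2 <= 1) by nra. nra.
    + unfold gam. unfold Rdiv. rewrite Rinv_mult, Rinv_mult.
      assert (0 < / d) by (apply Rinv_0_lt_compat; lra).
      assert (0 < / (1 - cos p)) by (apply Rinv_0_lt_compat; lra).
      assert (/ r <= 4) by (replace 4 with (/ (1/4)) by field; apply Rinv_le_contravar; lra).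
      assert (0 < / r) by (apply Rinv_0_lt_compat; lra).
      assert (0 < lam * M * / d * / (1 - cos p)) by (apply Rmult_lt_0_compat; [apply Rmult_lt_0_compat|]; lra).
      replace (lam * M * (/ d * / r * / (1 - cos p))) with ((lam * M * / d * / (1 - cos p)) * / r) by ring.
      replace (8 * lam * M * / d * / (1 - cos p)) with ((lam * M * / d * / (1 - cos p)) * 8) by ring.
      apply Rmult_le_compat_l; lra.
  - assert (Hz : Cmod (zp (RtoC d) r p) <= 1 - 1/2).
    { eapply Rle_trans. replace (zp (RtoC d) r p) with ((zp (RtoC d) r p - RtoC d) + RtoC d)%C by ring.
      apply Cmod_triangle. rewrite zp_c, Cmod_R, !Rabs_pos_eq; lra. }
    eapply Rle_trans. apply (Hg (1/2) ltac:(lra) ltac:(lra) _ Hz).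
    replace (lam * M / (1 / 2)) with (2 * (lam * M)) by field.
    apply Rle_trans with ((8 * lam * M / d) / 2).
    + replace (8 * lam * M / d / 2) with ((lam * M) * (4 / d)) by (field; lra). rewrite (Rmult_comm 2).
      apply Rmult_le_compat_l. lra.
      apply Rle_trans with 16. lra. replace 16 with (4 / (1/4)) by field.
      unfold Rdiv. apply Rmult_le_compat_l. lra. apply Rinv_le_contravar; lra.
    + unfold Rdiv. apply Rmult_le_compat_l. 
      assert (0 < / d) by (apply Rinv_0_lt_compat; lra). nra.
      apply Rinv_le_contravar; lra.
Qed.

Lemma exists_pow2 y : 1 <= y -> exists k : nat, y <= 2 ^ k < 2 * y.
Proof.
  intros Hy.
  assert (Hgen : forall N : nat, forall y, 1 <= y <= 2 ^ N -> exists k : nat, y <= 2 ^ k < 2 * y).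
  { induction N; intros z Hz.
    - exists 0%nat. simpl in *. lra.
    - destruct (Rle_dec z (2 ^ N)).
      + apply IHN. lra.
      + exists (S N). simpl in *. lra. }
  destruct (nfloor_ex y ltac:(lra)) as [N HN].
  apply (Hgen (S N)). split; auto.
  assert (INR (S N) <= 2 ^ S N).
  { clear. induction N. simpl. lra. rewrite S_INR. assert (1 <= 2 ^ S N) by (apply pow_R1_Rle; lra).
    replace (2 ^ S (S N)) with (2 * 2 ^ S N) by reflexivity. lra. }
  rewrite S_INR in H. lra.
Qed.

Lemma one_minus_cos_pos p : 0 < p < 2 * PI -> 0 < 1 - cos p.
Proof.
  intros Hp. replace p with (2 * (p / 2)) by field. rewrite cos_2a_sin.
  assert (0 < sin (p / 2)) by (apply sin_gt_0; lra). nra.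
Qed.

Lemma prodR_div n A x : (forall j, (j < n)%nat -> x j <> 0) ->
  prodR n (fun j => A / x j) = A ^ n / prodR n x.
Proof.
  induction n; intros Hx; simpl. field.
  rewrite IHn by (intros; apply Hx; lia).
  assert (prodR n x <> 0).
  { clear IHn. induction n. simpl; lra. simpl. apply Rmult_integral_contrapositive. split.
    apply IHn. intros; apply Hx; lia. apply Hx; lia. }
  field; split; auto; apply Hx; lia.
Qed.

Lemma Rpower_decr x y z : 0 < x < 1 -> y < z -> Rpower x z < Rpower x y.
Proof.
  intros Hx Hyz. unfold Rpower. apply exp_increasing.
  assert (ln x < 0) by (rewrite <- ln_1; apply ln_increasing; lra). nra.
Qed.

Lemma rot_zp c r t al : rot c (ep al) (zp c r t) = zp c r (t + al).
Proof.
  unfold rot, zp, ep. rewrite cos_plus, sin_plus. destruct c. unfold Cmult, Cplus, Cminus, Copp, RtoC; simpl.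
  apply injective_projections; simpl; ring.
Qed.

Lemma zp_period c r t : zp c r (t + 2 * PI) = zp c r t.
Proof. unfold zp, ep. rewrite cos_plus, sin_plus, cos_2PI, sin_2PI. f_equal. f_equal. f_equal; ring. Qed.

Lemma final_numeric (d a lam M kap : R) (k : nat) :
  0 < d -> d <= 1/4 -> 0 < a -> 1 <= lam -> 1 <= M -> 0 < kap -> kap <= 1 ->
  2 ^ k < 2 * (2 * PI / a) ->
  Rpower (d * kap / (lam * M)) (12 * PI / a) * (2 * (8 * lam * M / d)) ^ (2 ^ k - 1)%nat < kap ^ (2 ^ k)%nat.
Proof.
  intros Hd Hd4 Ha Hl HM Hk Hk1 Hn.
  pose proof (two_pow_pos k) as Hn1.
  assert (HlM : 1 <= lam * M) by nra.
  set (x := d * kap / (lam * M)).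
  assert (Hx0 : 0 < x) by (unfold x; apply Rdiv_lt_0_compat; nra).
  assert (Hx1 : x <= 1/4).
  { unfold x. apply Rle_trans with (d * kap / 1). unfold Rdiv. apply Rmult_le_compat_l. nra.
    apply Rinv_le_contravar; lra. unfold Rdiv. rewrite Rinv_1, Rmult_1_r. nra. }
  set (n := (2 ^ k)%nat).
  assert (HnR : INR n = 2 ^ k) by (unfold n; rewrite pow_INR; simpl; f_equal; lra).
  assert (Hb : Rpower x (12 * PI / a) < x ^ (3 * n)%nat).
  { rewrite <- Rpower_pow by auto. apply Rpower_decr. lra.
    rewrite mult_INR, HnR. simpl (INR 3). 
    replace (12 * PI / a) with (3 * (2 * (2 * PI / a))) by (field; lra). lra. }
  set (A2 := 2 * (8 * lam * M / d)).
  assert (HA2 : 0 < A2) by (unfold A2; apply Rmult_lt_0_compat; [lra|]; apply Rdiv_lt_0_compat; nra).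
  set (q := d / (16 * lam * M)).
  assert (Hq : 0 < q <= 1).
  { unfold q. split. apply Rdiv_lt_0_compat; nra. unfold Rdiv. 
    apply Rle_trans with (d * / 1). apply Rmult_le_compat_l. lra. apply Rinv_le_contravar; nra.
    rewrite Rinv_1; lra. }
  assert (HqA : q * A2 = 1) by (unfold q, A2; field; nra).
  assert (Hx3 : x ^ (3 * n)%nat <= (kap * q) ^ n).
  { rewrite pow_mult. apply pow_incr. split. apply pow_le; lra.
    replace (kap * q) with (x / 16) by (unfold x, q; field; nra). simpl. nra. }
  assert (Hfin : (kap * q) ^ n * A2 ^ (n - 1)%nat <= kap ^ n).
  { replace ((kap * q) ^ n) with ((kap * q) * (kap * q) ^ (n - 1)) by (rewrite tech_pow_Rmult; f_equal; lia).
    replace (kap ^ n) with (kap * kap ^ (n - 1)) by (rewrite tech_pow_Rmult; f_equal; lia).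
    replace (kap * q * (kap * q) ^ (n - 1) * A2 ^ (n - 1))
      with (kap * kap ^ (n - 1) * q * (q * A2) ^ (n - 1)) by (rewrite !Rpow_mult_distr; ring).
    rewrite HqA, pow1.
    assert (0 < kap * kap ^ (n - 1)) by (apply Rmult_lt_0_compat; [lra| apply pow_lt; lra]). nra. }
  assert (0 < A2 ^ (n - 1)) by (apply pow_lt; lra).
  fold n. fold A2. apply Rlt_le_trans with (x ^ (3 * n) * A2 ^ (n - 1)).
  apply Rmult_lt_compat_r; auto.
  apply Rle_trans with ((kap * q) ^ n * A2 ^ (n - 1)); auto.
  apply Rmult_le_compat_r; lra.
Qed.

Lemma prodR_rot n f : f n = f O -> prodR n (fun j => f (S j)) = prodR n f.
Proof.
  intros Hf. destruct n. reflexivity. rewrite (prodR_S_left n f). simpl. rewrite Hf. ring.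
Qed.

Lemma Pi_period (f : R -> R) n s t : INR n * s = 2 * PI -> (forall x, f (x + 2 * PI) = f x) ->
  prodR n (fun j => f (t + s + INR j * s)) = prodR n (fun j => f (t + INR j * s)).
Proof.
  intros Hn Hp.
  rewrite <- (prodR_rot n (fun j => f (t + INR j * s))).
  - apply prodR_ext. intros j _. f_equal. rewrite S_INR. ring.
  - simpl. rewrite Hn, Hp. f_equal. ring.
Qed.

Lemma Pi_shift (f : R -> R) n s t m : INR n * s = 2 * PI -> (forall x, f (x + 2 * PI) = f x) ->
  prodR n (fun j => f (t - INR m * s + INR j * s)) = prodR n (fun j => f (t + INR j * s)).
Proof.
  intros Hn Hp. induction m.
  - apply prodR_ext. intros j _. f_equal. simpl. ring.
  - rewrite <- IHm. rewrite <- (Pi_period f n s (t - INR (S m) * s)) by auto.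
    apply prodR_ext. intros j _. f_equal. rewrite S_INR. ring.
Qed.


Theorem corollary5p6 :
  exists Cst : R, 0 < Cst /\
  forall (delta a lambda M kappa mu : R) (g : C -> C),
    0 < delta -> delta <= 1 / 4 ->
    0 < a -> a < PI ->
    1 <= lambda -> 1 <= M ->
    0 < kappa -> kappa <= 1 ->
    0 <= mu -> mu < 1 - delta ->
    cont_on_closed_disk g ->
    (forall z : C, Cmod z < 1 -> C_holo_at g z) ->
    kappa <= Cmod (g (RtoC delta)) ->
    (forall gamma : R, 0 < gamma -> gamma <= 1 - delta ->
       forall z : C, Cmod z <= 1 - gamma -> Cmod (g z) <= lambda * M / gamma) ->
    exists z : C, arcP delta mu a z /\
      Rpower (delta * kappa / (lambda * M)) (Cst / a) <= Cmod (g z).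
Proof.
  pose proof PI_RGT_0 as HPI.
  exists (12 * PI). split. lra.
  intros d a lam M kap mu g Hd Hd4 Ha HaPI Hl HM Hk Hk1 Hmu Hmu1 Hcont Hhol Hgd Hgrow.
  set (b := Rpower (d * kap / (lam * M)) (12 * PI / a)).
  apply NNPP. intros Hno.
  assert (Hlt : forall z, arcP d mu a z -> Cmod (g z) < b).
  { intros z Hz. apply Rnot_le_lt. intros Hle. apply Hno. exists z. split; auto. }
  set (r := gamma_radius d mu).
  assert (Hr : 0 < r) by (unfold r, gamma_radius; lra).
  assert (Hr1 : r <= 1) by (unfold r, gamma_radius; lra).
  set (c := RtoC d).
  assert (Hdisk : forall v, Cmod (v - c) <= r -> Cmod v <= 1).
  { intros v Hv. replace v with ((v - c) + c)%C by ring. eapply Rle_trans. apply Cmod_triangle.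
    unfold c in *. rewrite Cmod_R, Rabs_pos_eq by lra. unfold r, gamma_radius in Hv. lra. }
  assert (Hdisko : forall v, Cmod (v - c) < r -> Cmod v < 1).
  { intros v Hv. replace v with ((v - c) + c)%C by ring. eapply Rle_lt_trans. apply Cmod_triangle.
    unfold c in *. rewrite Cmod_R, Rabs_pos_eq by lra. unfold r, gamma_radius in Hv. lra. }
  destruct (exists_pow2 (2 * PI / a)) as [k [Hk1' Hk2']].
  { apply Rle_trans with 2. lra. apply Rmult_le_reg_r with a. lra. unfold Rdiv. 
    rewrite Rmult_assoc, Rinv_l, Rmult_1_r by lra. lra. }
  set (n := (2 ^ k)%nat).
  pose proof (two_pow_pos k) as Hn1. fold n in Hn1.
  assert (HnR : INR n = 2 ^ k) by (unfold n; rewrite pow_INR; simpl; f_equal; lra).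
  assert (Hn2 : (2 <= n)%nat).
  { destruct (Nat.le_gt_cases 2 n) as [?|Hlt2]; auto. exfalso.
    assert (INR n < 2) by (apply (lt_INR n 2) in Hlt2; simpl in Hlt2; lra).
    assert (2 < 2 * PI / a).
    { apply Rmult_lt_reg_r with a. lra. unfold Rdiv. rewrite Rmult_assoc, Rinv_l, Rmult_1_r by lra. lra. }
    lra. }
  set (s := 2 * PI / INR n).
  assert (HnRpos : 0 < INR n) by (apply lt_0_INR; lia).
  assert (Hs : 0 < s) by (unfold s; apply Rdiv_lt_0_compat; lra).
  assert (Hns : INR n * s = 2 * PI) by (unfold s; field; lra).
  assert (Hsa : s <= a).
  { unfold s. rewrite HnR. assert (0 < 2 * PI / a) by (apply Rdiv_lt_0_compat; lra).
    apply Rle_trans with (2 * PI / (2 * PI / a)).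
    unfold Rdiv at 1 2. apply Rmult_le_compat_l. lra. apply Rinv_le_contravar; lra.
    right. field. lra. }
  set (A := 8 * lam * M / d).
  set (F := fun (j : nat) (z : C) => g (rot c (ep (INR j * s)) z)).
  set (G := fun z => prodC n (fun j => F j z)).
  assert (HGc : Cmod (G c) = Cmod (g c) ^ n).
  { unfold G, F. rewrite Cmod_prodC. rewrite <- prodR_const. apply prodR_ext. intros j _.
    unfold rot. replace (c + ep (INR j * s) * (c - c))%C with c by ring. reflexivity. }
  assert (Hbound : Cmod (G c) <= b * (2 * A) ^ (n - 1)).
  { apply (maxmod G c r); auto.
    - intros z Hz. unfold G. apply prodC_derive. intros j _. unfold F. apply rot_comp_derive.
      apply Hhol. apply Hdisko. unfold rot. replace (c + ep (INR j * s) * (z - c) - c)%C with (ep (INR j * s) * (z - c))%C by ring.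
      rewrite Cmod_mult, Cmod_ep. lra.
    - intros z Hz. unfold G. apply CcontD_prod. intros j _. unfold F. apply rot_contD; auto. apply Cmod_ep.
    - intros t Ht.
      set (f := fun x => Cmod (g (zp c r x))).
      assert (HG : Cmod (G (zp c r t)) = prodR n (fun j => f (t + INR j * s))).
      { unfold G, F. rewrite Cmod_prodC. apply prodR_ext. intros j _. rewrite rot_zp. reflexivity. }
      rewrite HG.
      assert (Hper : forall x, f (x + 2 * PI) = f x) by (intros x; unfold f; rewrite zp_period; reflexivity).
      destruct (nfloor_ex (t / s + 1 / 2)) as [m Hm].
      { assert (0 <= t / s) by (apply Rdiv_le_0_compat; lra). lra. }
      rewrite <- (Pi_shift f n s t m Hns Hper).
      set (t' := t - INR m * s).
      assert (Ht' : Rabs t' <= s / 2).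
      { unfold t'. destruct Hm as [Hm1 Hm2].
        assert (E1 : INR m * s <= t + s / 2).
        { apply Rmult_le_compat_r with (r := s) in Hm1; [|lra].
          replace ((t / s + 1 / 2) * s) with (t + s / 2) in Hm1 by (field; lra). lra. }
        assert (E2 : t + s / 2 < (INR m + 1) * s).
        { apply Rmult_lt_compat_r with (r := s) in Hm2; [|lra].
          replace ((t / s + 1 / 2) * s) with (t + s / 2) in Hm2 by (field; lra). lra. }
        apply Rabs_le. lra. }
      replace n with (S (n - 1)) by lia. rewrite prodR_S_left. replace (S (n - 1)) with n by lia.
      assert (Hf0 : f (t' + INR 0 * s) <= b).
      { left. unfold f. replace (t' + INR 0 * s) with t' by (simpl; ring). apply Hlt.
        exists t'. split.
        - fold r. apply Rle_trans with (s / 2). auto. apply Rle_trans with (a / 2). lra.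
          unfold Rdiv. apply Rmult_le_compat_l. lra. apply Rinv_le_contravar; lra.
        - fold r. unfold zp, ep, c. unfold Cmult, Cplus, RtoC; simpl. apply injective_projections; simpl; ring. }
      assert (Hb' : -(s/2) <= t' <= s/2).
      { pose proof (Rle_abs t'). pose proof (Rle_abs (- t')). rewrite Rabs_Ropp in *. lra. }
      assert (Hpos : forall j, (j < n - 1)%nat -> 0 < 1 - cos (t' + 2 * PI * INR (S j) / INR (2 ^ k))).
      { intros j Hj. fold n.
        replace (t' + 2 * PI * INR (S j) / INR n) with (t' + INR (S j) * s) by (unfold s; field; lra).
        assert (HjR : 1 <= INR (S j) <= INR n - 1).
        { split. rewrite S_INR. pose proof (pos_INR j). lra.
          assert (Hx : INR (S j) <= INR (n - 1)) by (apply le_INR; lia). rewrite minus_INR in Hx by lia. change (INR 1) with 1 in Hx. lra. }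
        apply one_minus_cos_pos. split.
        + apply Rlt_le_trans with (- (s / 2) + 1 * s). lra.
          apply Rplus_le_compat. lra. apply Rmult_le_compat_r; lra.
        + apply Rle_lt_trans with (s / 2 + (INR n - 1) * s).
          apply Rplus_le_compat. lra. apply Rmult_le_compat_r; lra.
          rewrite Rmult_minus_distr_r, Rmult_1_l. lra. }
      assert (Hfac : forall j, (j < n - 1)%nat -> 0 <= f (t' + INR (S j) * s) <=
          A / (1 - cos (t' + 2 * PI * INR (S j) / INR (2 ^ k)))).
      { intros j Hj. split. apply Cmod_ge_0. pose proof (Hpos j Hj) as Hp. fold n in Hp |- *.
        replace (t' + 2 * PI * INR (S j) / INR n) with (t' + INR (S j) * s) in Hp |- * by (unfold s; field; lra).
        apply factor_bound; auto. unfold r, gamma_radius; lra. }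
      assert (HP : (/2) ^ (n - 1) <= prodR (n - 1) (fun j => 1 - cos (t' + 2 * PI * INR (S j) / INR (2 ^ k)))).
      { apply cosprod. rewrite <- HnR. apply Rle_trans with (s / 2); auto. right. unfold s. field. lra. }
      assert (HP0 : 0 < (/2) ^ (n - 1)) by (apply pow_lt; lra).
      assert (Hprod : prodR (n - 1) (fun j => f (t' + INR (S j) * s)) <= (2 * A) ^ (n - 1)).
      { eapply Rle_trans. apply prodR_le. exact Hfac.
        rewrite prodR_div by (intros j Hj; pose proof (Hpos j Hj); lra).
        assert (HA : 0 <= A) by (unfold A; apply Rdiv_le_0_compat; nra).
        apply Rle_trans with (A ^ (n - 1) / (/2) ^ (n - 1)).
        unfold Rdiv. apply Rmult_le_compat_l. apply pow_le; auto. apply Rinv_le_contravar; lra.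
        right. rewrite pow_inv, Rpow_mult_distr. unfold Rdiv. rewrite Rinv_inv. ring. }
      assert (Hpn : 0 <= prodR (n - 1) (fun j => f (t' + INR (S j) * s))).
      { apply prodR_nonneg. intros; apply Cmod_ge_0. }
      assert (Hf0' : 0 <= f (t' + INR 0 * s)) by apply Cmod_ge_0.
      apply Rmult_le_compat; auto. }
  assert (Hkn : kap ^ n <= Cmod (G c)).
  { rewrite HGc. apply pow_incr. split. lra. auto. }
  pose proof (final_numeric d a lam M kap k Hd Hd4 Ha Hl HM Hk Hk1 Hk2') as Hfinal.
  fold n in Hfinal. fold b A in Hfinal. lra.
Qed.
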